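(* Let $G=(V,E)$ be a finite graph with at least one vertex and $k>0$ an integer, and let $\mathcal F_k$ be the set of all stars $\sigma=\{(A_i,B_i):i=0,\dots,n\}\subseteq\vec S_k$ with $\bigl|\bigcap_{i=0}^nB_i\bigr|<k$. Then $\mathcal F_k$ is closed under shifting: whenever $\vec s_0\in\vec S_k$ is linked to some $\vec r\le\vec s_0$ in $\vec S_k$ that is not forced by $\mathcal F_k$, then $\vec s_0$ is $\mathcal F_k$-linked to $\vec r$.
   Context: An oriented vertex separation of $G$ is an ordered pair $(A,B)$ with $A\cup B=V$ and no edge between $A\setminus B$ and $B\setminus A$. They form a universe $\vec U$ with $(A,B)\le(C,D)$ iff $A\subseteq C$, $B\supseteq D$; $(A,B)^*=(B,A)$; $(A,B)\vee(C,D)=(A\cup C,B\cap D)$; $(A,B)\wedge(C,D)=(A\cap C,B\cup D)$. $\vec S_k=\{(A,B)\in\vec U:|A\cap B|<k\}$ and $S_k$ is its set of separations $s=\{\vec s,\vec s^{\,*}\}$; write $\overleftarrow s=\vec s^{\,*}$; $s$ is degenerate if $\vec s=\overleftarrow s$; $\vec r$ is trivial if some $s\in S_k$ has $\vec r<\vec s$ and $\vec r<\overleftarrow s$. A star is a nonempty set $\sigma$ with $\vec r\le\overleftarrow s$ for all distinct $\vec r,\vec s\in\sigma$. $\mathcal F$ forces $\vec r$ if $\{\overleftarrow r\}\in\mathcal F$ or $r$ is degenerate (elements not forced by $\mathcal F_k$ are nontrivial and nondegenerate). For nontrivial nondegenerate $\vec r$, $\vec S_{\ge\vec r}$ is the set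 of all orientations of separations in $S_k$ having an orientation $\ge\vec r$; for $\vec s_0\ge\vec r$ the shifting map $f:\vec S_{\ge\vec r}\to\vec U$ is $f(\vec s)=\vec s\vee\vec s_0$, $f(\overleftarrow s)=(\vec s\vee\vec s_0)^*$ for all $\vec s\in\vec S_{\ge\vec r}\setminus\{\overleftarrow r\}$ with $\vec s\ge\vec r$. $\vec s_0$ is linked to $\vec r$ if $\vec s_0\ge\vec r$ and $\vec s\vee\vec s_0\in\vec S_k$ for all $\vec s\in\vec S_k$ with $\vec s\ge\vec r$, $\vec s\ne\overleftarrow r$; it is $\mathcal F$-linked to $\vec r$ if moreover $f(\sigma)\in\mathcal F$ for every star $\sigma\in\mathcal F$ with $\sigma\subseteq\vec S_{\ge\vec r}\setminus\{\overleftarrow r\}$ having an element $\ge\vec r$. *)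

(* Defs.v *)
From mathcomp Require Import all_boot.
Set Implicit Arguments. Unset Strict Implicit. Unset Printing Implicit Defensive.

Section Seps.
Variable V : finType.

Definition osep := ({set V} * {set V})%type.

Definition is_sep (e : rel V) (s : osep) : bool :=
  (s.1 :|: s.2 == setT) &&
  [forall x in s.1 :\: s.2, forall y in s.2 :\: s.1, ~~ e x y].

Definition sep_le (s t : osep) : bool := (s.1 \subset t.1) && (t.2 \subset s.2).
Definition sep_lt (s t : osep) : bool := (s != t) && sep_le s t.
Definition sep_inv (s : osep) : osep := (s.2, s.1).
Definition sep_join (s t : osep) : osep := (s.1 :|: t.1, s.2 :&: t.2).
Definition sep_meet (s t : osep) : osep := (s.1 :&: t.1, s.2 :|: t.2).

Definition inSk (e : rel V) (k : nat) (s : osep) : bool :=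
  is_sep e s && (#|s.1 :&: s.2| < k).

Definition degenerate (s : osep) : bool := s == sep_inv s.

Definition trivial_sep (e : rel V) (k : nat) (r : osep) : bool :=
  [exists s, inSk e k s && sep_lt r s && sep_lt r (sep_inv s)].

Definition is_star (sigma : {set osep}) : bool :=
  (sigma != set0) &&
  [forall r in sigma, forall s in sigma, (r != s) ==> sep_le r (sep_inv s)].

Definition Fk (e : rel V) (k : nat) (sigma : {set osep}) : bool :=
  [&& sigma \subset [set s | inSk e k s], is_star sigma &
      #|\bigcap_(s in sigma) s.2| < k].

Definition forces (F : pred {set osep}) (r : osep) : bool :=
  F [set sep_inv r] || degenerate r.

Definition S_ge (e : rel V) (k : nat) (r : osep) : {set osep} :=
  [set s | inSk e k s && (sep_le r s || sep_le r (sep_inv s))].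

Definition shift (r s0 s : osep) : osep :=
  if sep_le r s then sep_join s s0 else sep_inv (sep_join (sep_inv s) s0).

Definition linked (e : rel V) (k : nat) (s0 r : osep) : Prop :=
  sep_le r s0 /\
  forall s, inSk e k s -> sep_le r s -> s != sep_inv r -> inSk e k (sep_join s s0).

Definition F_linked (e : rel V) (k : nat) (F : pred {set osep}) (s0 r : osep) : Prop :=
  linked e k s0 r /\
  forall sigma : {set osep}, F sigma -> is_star sigma ->
    sigma \subset S_ge e k r :\ sep_inv r ->
    (exists2 s, s \in sigma & sep_le r s) ->
    F [set shift r s0 s | s in sigma].

End Seps.

(* Main.v *)
Require Import Defs.
From mathcomp Require Import all_boot.
Set Implicit Arguments. Unset Strict Implicit. Unset Printing Implicit Defensive.

Section Aux.
Variable V : finType.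
Implicit Types (s t r : osep V).

Lemma le_inv s t : sep_le s t -> sep_le (sep_inv t) (sep_inv s).
Proof. by rewrite /sep_le /= andbC. Qed.

Lemma le_trans r s t : sep_le r s -> sep_le s t -> sep_le r t.
Proof.
rewrite /sep_le => /andP[h1 h2] /andP[h3 h4].
by rewrite (subset_trans h1 h3) (subset_trans h4 h2).
Qed.

Lemma inSk_inv (e : rel V) k s : symmetric e -> inSk e k s -> inSk e k (sep_inv s).
Proof.
move=> esym; rewrite /inSk /is_sep /= => /andP[/andP[/eqP cov /forallP H] ord].
rewrite setUC cov eqxx setIC ord andbT /=.
apply/forallP => x; apply/implyP => xin; apply/forallP => y; apply/implyP => yin.
rewrite esym.
by have := H y; move/implyP/(_ yin)/forallP/(_ x)/implyP/(_ xin).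
Qed.

Lemma star_le (sigma : {set osep V}) x y :
  is_star sigma -> x \in sigma -> y \in sigma -> x != y -> sep_le x (sep_inv y).
Proof.
case/andP=> _ /forallP H xi yi nxy.
by move: (H x); rewrite xi /= => /forallP/(_ y); rewrite yi nxy.
Qed.

Lemma not_le_inv (e : rel V) k r : inSk e k r -> k <= #|r.1| -> ~~ sep_le r (sep_inv r).
Proof.
move=> /andP[_ ord] kr; apply/negP; rewrite /sep_le /= andbb => sub.
by move: ord; rewrite (setIidPl sub) ltnNge kr.
Qed.

Lemma invK s : sep_inv (sep_inv s) = s.
Proof. by case: s. Qed.

End Aux.

Theorem lemma5p6 (V : finType) (e : rel V) (k : nat)
  (e_sym : symmetric e) (e_irr : irreflexive e)
  (V_ne : 0 < #|V|) (k_pos : 0 < k)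
  (r s0 : osep V) :
  inSk e k s0 -> inSk e k r -> sep_le r s0 ->
  ~~ forces (Fk e k) r ->
  linked e k s0 r ->
  F_linked e k (Fk e k) s0 r.
Proof.
move=> s0S rS rs0 nforce lnk.
have kr : k <= #|r.1|.
  move: nforce; rewrite /forces negb_or => /andP[nF _].
  rewrite leqNgt; apply: contra nF => rlt.
  rewrite /Fk big_set1 /= rlt andbT; apply/andP; split.
  - by apply/subsetP => x; rewrite !inE => /eqP ->; apply: inSk_inv.
  - rewrite /is_star; apply/andP; split; first by apply/set0Pn; exists (sep_inv r); rewrite inE.
    apply/forallP => x; apply/implyP; rewrite inE => /eqP ->.
    by apply/forallP => y; apply/implyP; rewrite inE => /eqP ->; rewrite eqxx.
have nrr := not_le_inv rS kr.
split => // sigma Fs star sub [s ssig rs].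
case: lnk => _ lnk.
have sub' x : x \in sigma ->
    [/\ inSk e k x, sep_le r x || sep_le r (sep_inv x) & x != sep_inv r].
  move=> xi; move/subsetP: sub => /(_ x xi).
  by rewrite !inE => /andP[nr /andP[sk le]]; split.
have uniq x : x \in sigma -> sep_le r x -> x = s.
  move=> xi rx; apply/eqP; apply/negPn/negP => nxs.
  have h := star_le star xi ssig nxs.
  have : sep_le r (sep_inv r) by apply: le_trans rx (le_trans h (le_inv rs)).
  by rewrite (negbTE nrr).
have shS x : x \in sigma -> inSk e k (shift r s0 x).
  move=> xi; have [xS xle xnr] := sub' x xi.
  rewrite /shift; case: ifP => rx.
  - exact: lnk.
  - apply: inSk_inv => //; apply: lnk.
    + exact: inSk_inv.
    + by move: xle; rewrite rx.
    + apply/eqP => h; have xr : x = r by rewrite -(invK x) h invK.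
      by move: rx; rewrite xr /sep_le !subxx.
have [sS _ _] := sub' s ssig.
pose T := \bigcap_(t in sigma | t != s) t.2.
have AT : s.1 \subset T.
  apply/bigcapsP => t /andP[ti nts].
  have st : s != t by rewrite eq_sym.
  by case/andP: (star_le star ssig ti st).
have x'S : inSk e k (T, s.2).
  move: (sS); rewrite /inSk /is_sep /= => /andP[/andP[cov _] _].
  apply/andP; split; first apply/andP; first split.
  - apply/eqP/setP => v; rewrite !inE.
    case vB: (v \in s.2); first by rewrite orbT.
    have : v \in s.1 :|: s.2 by rewrite (eqP cov) inE.
    by rewrite inE vB orbF => vA; rewrite (subsetP AT v vA).
  - apply/forallP=> v; apply/implyP; rewrite inE => /andP[vnB vT].
    apply/forallP => w; apply/implyP; rewrite inE => /andP[wnT wB].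
    apply/negP => evw.
    move/negP: wnT; apply.
    apply/bigcapP => t /andP[ti nts].
    apply/negPn/negP => wnBt.
    have [tS _ _] := sub' t ti.
    move: tS; rewrite /inSk /is_sep => /andP[/andP[covt /forallP Ht] _].
    have wAt : w \in t.1.
      have : w \in t.1 :|: t.2 by rewrite (eqP covt) inE.
      by rewrite inE (negbTE wnBt) orbF.
    have vBt : v \in t.2 by move/bigcapP: vT => /(_ t); rewrite ti nts; apply.
    have vnAt : v \notin t.1.
      apply/negP => vAt.
      have := star_le star ti ssig nts; case/andP => h _.
      by move: vnB; rewrite (subsetP h v vAt).
    have := Ht w; rewrite inE wnBt wAt /= => /forallP/(_ v).
    by rewrite inE vnAt vBt /= e_sym evw.
  - move: Fs; rewrite /Fk => /and3P[_ _].
    by rewrite (bigD1 s ssig) /= setIC.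
have x'ge : sep_le r (T, s.2).
  move: rs; rewrite /sep_le /= => /andP[h1 ->].
  by rewrite (subset_trans h1 AT).
have x'nr : (T, s.2) != sep_inv r.
  by apply/eqP => h; move: nrr; rewrite -h x'ge.
have := lnk _ x'S x'ge x'nr; rewrite /inSk /sep_join /= => /andP[_ ordlt].
rewrite /Fk; apply/and3P; split.
- apply/subsetP => y /imsetP[x xi ->]; rewrite inE; exact: shS.
- rewrite /is_star imset_eq0; apply/andP; split; first by case/andP: star.
  apply/forallP => y1; apply/implyP => /imsetP[x1 x1i ->].
  apply/forallP => y2; apply/implyP => /imsetP[x2 x2i ->].
  apply/implyP => neq.
  have nx : x1 != x2 by apply: contraNneq neq => ->.
  have := star_le star x1i x2i nx; rewrite /sep_le /= => /andP[h1 h2].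
  case rx1: (sep_le r x1); case rx2: (sep_le r x2).
  + by move: nx; rewrite (uniq _ x1i rx1) (uniq _ x2i rx2) eqxx.
  + by rewrite /shift rx1 rx2 /sep_le /sep_join /sep_inv /= setSU // setSI.
  + by rewrite /shift rx1 rx2 /sep_le /sep_join /sep_inv /= setSU // setSI.
  + rewrite /shift rx1 rx2 /sep_le /sep_join /sep_inv /=.
    by rewrite (subset_trans (subsetIl _ _) (subset_trans h1 (subsetUl _ _)))
               (subset_trans (subsetIl _ _) (subset_trans h2 (subsetUl _ _))).
- apply: leq_ltn_trans (subset_leq_card _) ordlt.
  apply/subsetP => v /bigcapP vY.
  have vs : v \in (shift r s0 s).2 by apply: vY; apply: imset_f.
  rewrite /shift rs /= in vs.
  rewrite inE vs andbT inE.
  case vA0: (v \in s0.1); first by rewrite orbT.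
  rewrite orbF; apply/bigcapP => t /andP[ti nts].
  have := vY (shift r s0 t) (imset_f _ ti).
  have rt : sep_le r t = false.
    by apply/negbTE; apply: contra nts => rt; apply/eqP; apply: uniq.
  by rewrite /shift rt /= !inE vA0 orbF.
Qed.
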